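(* Consider the binary noisy-label setting described in the context, and assume ${\mathbb P}(Y=+1)={\mathbb P}(Y=-1)$ and $e_+=e_-$. Let $\mathcal H$ be a hypothesis space, $h^*_f\in\arg\max_{h\in\mathcal H}D_f(P_{h\times Y}\|Q_{h\times Y})$, and $\mathcal H^*$ as defined in the context. Then for each of the following $f$-divergences, $D_f$ is $\mathcal H^*$-robust, i.e. $h^*_f=\arg\max_{h\in\mathcal H^*}D_f(\tilde P_{h\times\tilde Y}\|\tilde Q_{h\times\tilde Y})$: Total Variation $f(v)=\frac12|v-1|$; Jenson–Shannon $f(v)=v\log v-(v+1)\log\frac{v+1}{2}$ (with $f^*(u)=-\log(2-e^u)$); Squared Hellinger $f(v)=(\sqrt v-1)^2$; Pearson $\chi^2$ $f(v)=(v-1)^2$; Neyman $\chi^2$ $f(v)=(1-v)^2/v$; KL $f(v)=v\log v$; Reverse KL $f(v)=-\log v$.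
   Context: $(X,Y)$ with $X\in\mathcal X$, $Y\in\{-1,+1\}$; noisy label $\tilde Y$ generated from $Y$, conditionally independently of $X$ given $Y$, with $e_+={\mathbb P}(\tilde Y=-1\mid Y=+1)$, $e_-={\mathbb P}(\tilde Y=+1\mid Y=-1)$, $e_++e_-<1$. A hypothesis space $\mathcal H$ is a set of classifiers $h:\mathcal X\to\{-1,+1\}$. $P_{h\times Y}(y,y')={\mathbb P}(h(X)=y,Y=y')$, $Q_{h\times Y}(y,y')={\mathbb P}(h(X)=y){\mathbb P}(Y=y')$, $\tilde P_{h\times\tilde Y},\tilde Q_{h\times\tilde Y}$ the same with $\tilde Y$; $D_f(P\|Q)=\sum_z q(z)f(p(z)/q(z))$. For $R\in\{Y,\tilde Y\}$ the fitness is ${\rm FIT}(h=y,R=y')=\frac{{\mathbb P}(h(X)=y\mid R=y')}{{\mathbb P}(h(X)=y)}$. Define $\mathcal H^*=\{h\in\mathcal H:\min_y{\rm FIT}(h=y,\tilde Y=y)\ge\max_y{\rm FIT}(h^*_f=y,Y=y)\ge1\}\cup\{h^*_f\}$. *)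

(* Defs.v *)
From HB Require Import structures.
From mathcomp Require Import all_boot all_order all_algebra.
From mathcomp Require Import all_classical all_reals all_analysis.
Set Implicit Arguments. Unset Strict Implicit. Unset Printing Implicit Defensive.
Import Order.TTheory GRing.Theory Num.Theory.
Local Open Scope classical_set_scope.
Local Open Scope ring_scope.

(* Labels in {-1,+1} are encoded as bool: true = +1, false = -1. *)

Section Defs.
Variables (R : realType) (d : measure_display) (T : measurableType d)
  (P : probability T R).

Definition pr (A : set T) : R := fine (P A).

(* for a classifier-valued r.v. H : T -> bool (H = h o X) and a label r.v. L *)
Definition Pjoint (H L : T -> bool) (y y' : bool) : R :=
  pr [set w | H w = y /\ L w = y'].
Definition Qprod (H L : T -> bool) (y y' : bool) : R :=
  pr [set w | H w = y] * pr [set w | L w = y'].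

(* D_f(P||Q) = sum_z q(z) f(p(z)/q(z)), z ranging over {-1,+1}^2,
   f extended-real valued (convention 0 * (+oo) = 0). *)
Definition Dfdiv (f : R -> \bar R) (p q : bool -> bool -> R) : \bar R :=
  (\sum_(y : bool) \sum_(y' : bool) (q y y')%:E * f (p y y' / q y y')%R)%E.

Definition FIT (H L : T -> bool) (y y' : bool) : R :=
  (pr [set w | H w = y /\ L w = y'] / pr [set w | L w = y'])
    / pr [set w | H w = y].

End Defs.

Inductive fdiv_kind :=
  TotalVariation | JensonShannon | SquaredHellinger | PearsonChi2
| NeymanChi2 | KLdiv | ReverseKL.

(* Generators f : [0,+oo) -> \bar R (only evaluated at v >= 0); the value
   +oo at v = 0 for Neyman chi^2 and reverse KL is the standard extension;
   0 * ln 0 = 0 (ln 0 = 0 in mathcomp-analysis). *)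
Definition fgen (R : realType) (k : fdiv_kind) (v : R) : \bar R :=
  match k with
  | TotalVariation => (`|v - 1| / 2)%:E
  | JensonShannon => (v * ln v - (v + 1) * ln ((v + 1) / 2))%:E
  | SquaredHellinger => ((Num.sqrt v - 1) ^+ 2)%:E
  | PearsonChi2 => ((v - 1) ^+ 2)%:E
  | NeymanChi2 => if v == 0 then +oo%E else ((1 - v) ^+ 2 / v)%:E
  | KLdiv => (v * ln v)%:E
  | ReverseKL => if v == 0 then +oo%E else (- ln v)%:E
  end.

(* Main.v *)
Require Import Defs.
From HB Require Import structures.
From mathcomp Require Import all_boot all_order all_algebra.
From mathcomp Require Import all_classical all_reals all_analysis.
From mathcomp Require Import ring lra.
Import Order.TTheory GRing.Theory Num.Theory.
Local Open Scope classical_set_scope.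
Local Open Scope ring_scope.

Section Core.
Variables (R : realType) (F : R -> \bar R).
Hypothesis F0 : F 0 = 0%E.
Hypothesis Finc : forall s t, 0 <= s -> s < t -> t <= 1 -> (F s < F t)%E.

Lemma Fle (s t : R) : 0 <= s -> s <= t -> t <= 1 -> (F s <= F t)%E.
Proof.
move=> s0 st t1; have [->|st'] := eqVneq s t; first by [].
by apply/ltW/Finc => //; rewrite lt_neqAle st' st.
Qed.

Lemma Fge0 (t : R) : 0 <= t -> t <= 1 -> (0 <= F t)%E.
Proof. by move=> t0 t1; rewrite -F0; apply: Fle. Qed.

Definition G (q dl : R) := ((q / 2)%:E * F (dl / q) + ((1 - q) / 2)%:E * F (dl / (1 - q)))%E.
Definition FITb (y : bool) (q dl : R) : R := if y then (q + dl) / q else (1 - q + dl) / (1 - q).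

Lemma fit1 {q x : R} : 0 <= q -> 1 <= (q + x) / q -> 0 < q /\ 0 <= x.
Proof.
move=> q0; have [->|qn0] := eqVneq q 0; first by rewrite invr0 mulr0 ler10.
have qp : 0 < q by rewrite lt_neqAle eq_sym qn0.
by rewrite ler_pdivlMr // mul1r lerDl.
Qed.

Lemma fitE (q x : R) : 0 < q -> (q + x) / q = 1 + x / q.
Proof. by move=> qp; rewrite mulrDl divff // gt_eqF. Qed.

Lemma ratio_bnd {q x : R} : 0 <= q -> 0 <= x -> x <= q -> 0 <= x / q <= 1.
Proof.
move=> q0 x0 xq; have [->|qn0] := eqVneq q 0; first by rewrite invr0 mulr0 lexx ler01.
have qp : 0 < q by rewrite lt_neqAle eq_sym qn0.
by rewrite divr_ge0 //= ler_pdivrMr // mul1r.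
Qed.

Lemma core (c q dl qs dls : R) :
  0 < c -> c <= 1 ->
  0 <= q -> q <= 1 -> dl <= q -> - dl <= q -> dl <= 1 - q -> - dl <= 1 - q ->
  0 <= qs -> qs <= 1 -> dls <= qs -> - dls <= qs -> dls <= 1 - qs -> - dls <= 1 - qs ->
  (G q dl <= G qs dls)%E ->
  (forall y y0, FITb y0 qs dls <= FITb y q (c * dl)) ->
  (exists y0, 1 <= FITb y0 qs dls) ->
  (G q (c * dl) <= G qs (c * dls))%E.
Proof.
move=> c0 c1 q0 q1 dq dq' dq1 dq1' qs0 qs1 dsq dsq' dsq1 dsq1' HG Hfit [y0 Hy0].
have [->|c1'] := eqVneq c 1; first by rewrite !mul1r.
have clt1 : c < 1 by rewrite lt_neqAle c1' c1.
have [qp cdl0] := fit1 q0 (le_trans Hy0 (Hfit true y0)).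
have [q1p cdl0'] := fit1 (x := c * dl) (q := 1 - q) ltac:(lra) (le_trans Hy0 (Hfit false y0)).
have dl0 : 0 <= dl by rewrite -(pmulr_rge0 _ c0).
have dls0 : 0 <= dls.
  by case: y0 Hy0 => /= /fit1 [] //; lra.
have [->|dln0] := eqVneq dl 0.
  rewrite mulr0 /G [0 / q]mul0r [0 / (1 - q)]mul0r F0 !mule0 adde0.
  apply: adde_ge0; apply: mule_ge0.
  - by rewrite lee_fin divr_ge0.
  - by case/andP: (ratio_bnd qs0 (mulr_ge0 (ltW c0) dls0) ltac:(nra)) => ? ?; apply: Fge0.
  - by rewrite lee_fin divr_ge0 //; lra.
  - by case/andP: (ratio_bnd (q := 1 - qs) ltac:(lra) (mulr_ge0 (ltW c0) dls0) ltac:(nra)) => ? ?; apply: Fge0.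
have dlp : 0 < dl by rewrite lt_neqAle eq_sym dln0.
exfalso.
set u := dl / q; set v := dl / (1 - q).
have u0 : 0 < u by rewrite divr_gt0.
have v0 : 0 < v by rewrite divr_gt0.
have u1 : u <= 1 by case/andP: (ratio_bnd (ltW qp) dl0 dq).
have v1 : v <= 1 by case/andP: (ratio_bnd (ltW q1p) dl0 dq1).
pose w := Num.min u v.
have w0 : 0 < w by rewrite lt_min u0 v0.
have wu : w <= u by rewrite ge_min lexx.
have wv : w <= v by rewrite ge_min lexx orbT.
have w1 : w <= 1 by apply: le_trans wu u1.
have Hfu : forall y, FITb y q (c * dl) = 1 + c * (if y then u else v).
  by case=> /=; rewrite fitE // mulrA.
have bnd : forall x y0', 0 <= x -> (x = qs \/ x = 1 - qs) ->
   FITb y0' qs dls = (x + dls) / x -> (x + dls) / x <= 1 + c * w ->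
   0 <= dls / x <= c * w.
  move=> x y0' x0 _ _ H.
  have [->|xn0] := eqVneq x 0; first by rewrite invr0 mulr0 lexx /=; nra.
  have xp : 0 < x by rewrite lt_neqAle eq_sym xn0.
  by rewrite divr_ge0 //=; move: H; rewrite fitE // lerD2l.
have Hw : forall y0', FITb y0' qs dls <= 1 + c * w.
  move=> y0'; rewrite /w; have [uv|vu] := leP u v.
    by have := Hfit true y0'; rewrite Hfu.
  by have := Hfit false y0'; rewrite Hfu.
have b1 : 0 <= dls / qs <= c * w.
  by apply: (bnd qs true) => //; [left| have := Hw true].
have b2 : 0 <= dls / (1 - qs) <= c * w.
  by apply: (bnd (1 - qs) false) => //; [lra|right| have := Hw false].
have cw1 : c * w <= 1 by nra.
have upper : (G qs dls <= (1 / 2)%:E * F (c * w))%E.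
  have -> : (1 / 2 : R) = qs / 2 + (1 - qs) / 2 by field.
  have h1 : (0 <= (qs / 2)%:E)%E by rewrite lee_fin; lra.
  have h2 : (0 <= ((1 - qs) / 2)%:E)%E by rewrite lee_fin; lra.
  rewrite EFinD ge0_muleDl //.
  case/andP: b1 => b1l b1r; case/andP: b2 => b2l b2r.
  by apply: leeD; apply: lee_wpmul2l => //; apply: Fle.
have lower : ((1 / 2)%:E * F w <= G q dl)%E.
  have -> : (1 / 2 : R) = q / 2 + (1 - q) / 2 by field.
  have h1 : (0 <= (q / 2)%:E)%E by rewrite lee_fin; lra.
  have h2 : (0 <= ((1 - q) / 2)%:E)%E by rewrite lee_fin; lra.
  rewrite EFinD ge0_muleDl //.
  by apply: leeD; apply: lee_wpmul2l => //; apply: Fle => //; apply: ltW.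
have strict : ((1 / 2)%:E * F (c * w) < (1 / 2)%:E * F w)%E.
  rewrite lte_pmul2l //.
  by apply: Finc => //; nra.
have := le_lt_trans upper (lt_le_trans strict lower).
by rewrite ltNge HG.
Qed.

End Core.

Section Ln.
Variable R : realType.

Lemma ln_le_sub1 {z : R} : 0 < z -> ln z <= z - 1.
Proof.
move=> z0; have := expR_ge1Dx (ln z); rewrite lnK ?posrE //; lra.
Qed.

Lemma ln_lt_sub1 {z : R} : 0 < z -> z != 1 -> ln z < z - 1.
Proof.
move=> z0 z1; have := @expR_gt1Dx R (ln z); rewrite lnK ?posrE // ln_eq0 // z1.
move=> /(_ isT); lra.
Qed.

Lemma lnle (a b : R) : 0 < a -> 0 < b -> b * (ln a - ln b) <= a - b.
Proof.
move=> a0 b0; rewrite -ln_div ?posrE //.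
have := ln_le_sub1 (divr_gt0 a0 b0) => h.
have : b * ln (a / b) <= b * (a / b - 1) by rewrite ler_pM2l.
by rewrite mulrBr mulrCA divff ?gt_eqF // mulr1 mulr1.
Qed.

Lemma lnlt (a b : R) : 0 < a -> 0 < b -> a != b -> b * (ln a - ln b) < a - b.
Proof.
move=> a0 b0 ab; rewrite -ln_div ?posrE //.
have := ln_lt_sub1 (divr_gt0 a0 b0) => h.
have : b * ln (a / b) < b * (a / b - 1).
  rewrite ltr_pM2l // h //; apply/eqP => E; move/eqP: ab; apply.
  have bn0 : b != 0 by rewrite gt_eqF.
  by rewrite -(mulfVK bn0 a) E mul1r.
by rewrite mulrBr mulrCA divff ?gt_eqF // mulr1 mulr1.
Qed.

Lemma tangent_incr (phi g : R -> R) :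
  (forall x y, 0 < x -> 0 <= y -> 0 <= phi y - phi x - g x * (y - x)) ->
  (forall x y, 0 < x -> 0 <= y -> y != x -> 0 < phi y - phi x - g x * (y - x)) ->
  (forall x1 x2, 0 < x1 -> x1 <= x2 -> g x1 <= g x2) ->
  forall s t, 0 <= s -> s < t -> t <= 1 ->
  phi (1 + s) + phi (1 - s) < phi (1 + t) + phi (1 - t).
Proof.
move=> Tw Ts Gm s t s0 st t1.
have h1 := Ts (1 + s) (1 + t) ltac:(lra) ltac:(lra) ltac:(apply/eqP; lra).
have h2 := Tw (1 - s) (1 - t) ltac:(lra) ltac:(lra).
have h3 := Gm (1 - s) (1 + s) ltac:(lra) ltac:(lra).
have h4 : 0 <= (t - s) * (g (1 + s) - g (1 - s)) by apply: mulr_ge0; lra.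
nra.
Qed.

End Ln.

Section KL.
Variable R : realType.

Lemma KL_incr (s t : R) : 0 <= s -> s < t -> t <= 1 ->
  (1 + s) * ln (1 + s) + (1 - s) * ln (1 - s) < (1 + t) * ln (1 + t) + (1 - t) * ln (1 - t).
Proof.
apply: (@tangent_incr R (fun v => v * ln v) (fun x => 1 + ln x)).
- move=> x y x0 y0; have [->|yn0] := eqVneq y 0; first by rewrite mul0r; nra.
  have yp : 0 < y by rewrite lt_neqAle eq_sym yn0.
  have := @lnle R x y x0 yp; nra.
- move=> x y x0 y0 yx; have [->|yn0] := eqVneq y 0; first by rewrite mul0r; nra.
  have yp : 0 < y by rewrite lt_neqAle eq_sym yn0.
  have := @lnlt R x y x0 yp ltac:(by rewrite eq_sym); nra.
- move=> x1 x2 x10 x12; rewrite lerD2l ler_ln ?posrE //; lra.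
Qed.

Definition phiJS (v : R) := v * ln v - (v + 1) * ln ((v + 1) / 2).

Lemma JS_tan (x y : R) : 0 < x -> 0 <= y ->
  0 <= phiJS y - phiJS x - (ln x + ln 2 - ln (x + 1)) * (y - x) /\
  (y != x -> 0 < phiJS y - phiJS x - (ln x + ln 2 - ln (x + 1)) * (y - x)).
Proof.
move=> x0 y0.
have l2 : forall v : R, 0 <= v -> ln ((v + 1) / 2) = ln (v + 1) - ln 2.
  by move=> v v0; rewrite ln_div ?posrE //; lra.
rewrite /phiJS !l2 //; last by lra.
set A := y * (ln y + ln (x + 1) - ln x - ln (y + 1)).
set B := ln (x + 1) - ln (y + 1).
have -> : y * ln y - (y + 1) * (ln (y + 1) - ln 2) - (x * ln x - (x + 1) * (ln (x + 1) - ln 2)) -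
   (ln x + ln 2 - ln (x + 1)) * (y - x) = A + B by rewrite /A /B; ring.
have hA : y - x <= (x + 1) * A.
  have [ye|yn0] := eqVneq y 0; first by rewrite /A ye !mul0r mulr0; lra.
  have yp : 0 < y by rewrite lt_neqAle eq_sym yn0.
  have := @lnle R (x * (y + 1)) (y * (x + 1)) ltac:(nra) ltac:(nra).
  rewrite !lnM ?posrE; try lra.
  rewrite /A; nra.
have hB : x - y <= (x + 1) * B.
  have := @lnle R (y + 1) (x + 1) ltac:(lra) ltac:(lra); rewrite /B; nra.
split; first by nra.
move=> yx.
have hB' : x - y < (x + 1) * B.
  have := @lnlt R (y + 1) (x + 1) ltac:(lra) ltac:(lra) ltac:(apply/eqP; move/eqP: yx; lra).
  rewrite /B; nra.
nra.
Qed.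

Lemma JS_incr (s t : R) : 0 <= s -> s < t -> t <= 1 ->
  phiJS (1 + s) + phiJS (1 - s) < phiJS (1 + t) + phiJS (1 - t).
Proof.
apply: (@tangent_incr R phiJS (fun x => ln x + ln 2 - ln (x + 1))).
- by move=> x y x0 y0; case: (@JS_tan x y x0 y0).
- by move=> x y x0 y0; case: (@JS_tan x y x0 y0).
- move=> x1 x2 x10 x12.
  suff : ln x1 + ln (x2 + 1) <= ln x2 + ln (x1 + 1) by lra.
  rewrite -!lnM ?posrE; try lra.
  rewrite ler_ln ?posrE; nra.
Qed.
End KL.

Section Fk.
Variable R : realType.

Definition Fk k (t : R) := (fgen k (1 + t) + fgen k (1 - t))%E.

Lemma fgen_ninfty k (v : R) : fgen k v != -oo%E.
Proof. by case: k => //=; case: (v == 0). Qed.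

Lemma Fk0 k : Fk k 0 = 0%E.
Proof.
rewrite /Fk addr0 subr0.
case: k => /=; rewrite ?oner_eq0 ?ln1 ?sqrtr1 ?subrr ?expr0n ?normr0 /= ?mul0r ?mulr0 ?oppr0 ?adde0 //.
by rewrite (_ : (1 + 1) / 2 = 1 :> R) ?ln1 ?mulr0 ?subrr ?adde0 //; field.
Qed.

Lemma Fk_incr k (s t : R) : 0 <= s -> s < t -> t <= 1 -> (Fk k s < Fk k t)%E.
Proof.
move=> s0 st t1; rewrite /Fk; case: k => /=.
- rewrite -!EFinD lte_fin.
  have e : forall x : R, 0 <= x -> `|1 + x - 1| / 2 + `|1 - x - 1| / 2 = x.
    move=> x x0; have -> : 1 + x - 1 = x by ring.
    have -> : 1 - x - 1 = - x by ring.
    rewrite normrN ger0_norm //; lra.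
  rewrite !e //; lra.
- rewrite -!EFinD lte_fin; exact: JS_incr.
- rewrite -!EFinD lte_fin.
  have sq : forall x : R, 0 <= x -> Num.sqrt x ^+ 2 = x by move=> x x0; rewrite sqr_sqrtr.
  have := sq (1 + s) ltac:(lra); have := sq (1 - s) ltac:(lra).
  have := sq (1 + t) ltac:(lra); have := sq (1 - t) ltac:(lra).
  have m : forall x : R, 0 <= x <= 1 -> Num.sqrt (1 + x) * Num.sqrt (1 - x) = Num.sqrt (1 - x ^+ 2).
    move=> x /andP[x0 x1]; rewrite -sqrtrM; last by lra.
    by congr Num.sqrt; ring.
  have ms := m s ltac:(apply/andP; lra); have mt := m t ltac:(apply/andP; lra).
  have lt : Num.sqrt (1 - t ^+ 2) < Num.sqrt (1 - s ^+ 2).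
    rewrite ltr_sqrt; first by nra.
    nra.
  set a := Num.sqrt (1 + s) in ms *; set b := Num.sqrt (1 - s) in ms *.
  set c := Num.sqrt (1 + t) in mt *; set d := Num.sqrt (1 - t) in mt *.
  move=> hd hc hb ha.
  have a0 : 0 <= a := sqrtr_ge0 _. have b0 : 0 <= b := sqrtr_ge0 _.
  have c0 : 0 <= c := sqrtr_ge0 _. have d0 : 0 <= d := sqrtr_ge0 _.
  have sq2 : (c + d) ^+ 2 < (a + b) ^+ 2.
    have -> : (c + d) ^+ 2 = c ^+ 2 + d ^+ 2 + 2 * (c * d) by ring.
    have -> : (a + b) ^+ 2 = a ^+ 2 + b ^+ 2 + 2 * (a * b) by ring.
    rewrite ha hb hc hd mt ms; lra.
  have key : c + d < a + b.
    set X := c + d in sq2 *; set Y := a + b in sq2 *.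
    have X0 : 0 <= X by rewrite /X; lra.
    have Y0 : 0 <= Y by rewrite /Y; lra.
    nra.
  have E : forall z : R, (z - 1) ^+ 2 = z ^+ 2 - 2 * z + 1 by move=> z; ring.
  rewrite !E ha hb hc hd; lra.
- rewrite -!EFinD lte_fin; nra.
- have n1 : forall x : R, 0 <= x -> (1 + x == 0) = false by move=> x x0; apply/negbTE; rewrite gt_eqF //; lra.
  rewrite (n1 s) // (n1 t); last by lra.
  have -> : (1 - s == 0) = false by apply/negbTE; rewrite gt_eqF //; lra.
  have [->|t1'] := eqVneq t 1.
    by rewrite subrr eqxx addey ?ltry.
  have -> : (1 - t == 0) = false by apply/negbTE; rewrite gt_eqF //; rewrite subr_gt0 lt_neqAle t1' t1.
  rewrite -!EFinD lte_fin.
  have t1s : t < 1 by rewrite lt_neqAle t1' t1.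
  have e : forall x : R, 0 <= x < 1 -> (1 - (1 + x)) ^+ 2 / (1 + x) + (1 - (1 - x)) ^+ 2 / (1 - x) = 2 * x ^+ 2 / (1 - x ^+ 2).
    move=> x /andP[x0 x1]; field; apply/and3P; split; rewrite gt_eqF //; [rewrite expr2; nra | lra | lra].
  rewrite !e; try (apply/andP; lra).
  have s1 : 0 < 1 - s ^+ 2 by rewrite subr_gt0 expr2; nra.
  have t2 : 0 < 1 - t ^+ 2 by rewrite subr_gt0 expr2; nra.
  have st2 : s ^+ 2 < t ^+ 2 by rewrite !expr2; nra.
  rewrite ltr_pdivrMr // mulrAC ltr_pdivlMr //.
  rewrite -subr_gt0 (_ : _ - _ = 2 * (t ^+ 2 - s ^+ 2)); last by ring.
  by rewrite mulr_gt0 // subr_gt0.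
- rewrite -!EFinD lte_fin; exact: KL_incr.
- have n1 : forall x : R, 0 <= x -> (1 + x == 0) = false by move=> x x0; apply/negbTE; rewrite gt_eqF //; lra.
  rewrite (n1 s) // (n1 t); last by lra.
  have -> : (1 - s == 0) = false by apply/negbTE; rewrite gt_eqF //; lra.
  have [->|t1'] := eqVneq t 1.
    by rewrite subrr eqxx addey ?ltry.
  have t1s : t < 1 by rewrite lt_neqAle t1' t1.
  have -> : (1 - t == 0) = false by apply/negbTE; rewrite gt_eqF //; lra.
  rewrite -!EFinD lte_fin -!opprD ltrN2 -!lnM ?posrE; try lra.
  rewrite ltr_ln ?posrE; nra.
Qed.

End Fk.

Lemma msetb {d} {T : measurableType d} (g : T -> bool) (mg : measurable_fun setT g) (B : set bool) :
  measurable [set w | B (g w)].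
Proof. by have := mg measurableT B I; rewrite setTI. Qed.

Section PrLemmas.
Variables (R : realType) (d : measure_display) (T : measurableType d) (P : probability T R).

Lemma prE A : measurable A -> P A = (pr P A)%:E.
Proof. by move=> mA; rewrite /pr fineK // fin_num_measure. Qed.

Lemma pr_ge0 A : 0 <= pr P A.
Proof. exact/fine_ge0/measure_ge0. Qed.

Lemma prU A B : measurable A -> measurable B -> A `&` B = set0 ->
  pr P (A `|` B) = pr P A + pr P B.
Proof.
move=> mA mB AB; apply: EFin_inj; rewrite EFinD -!prE ?measureU //.
exact: measurableU.
Qed.

Lemma prT : pr P setT = 1.
Proof. by rewrite /pr probability_setT. Qed.

Lemma mset2 (g L : T -> bool) (mg : measurable_fun setT g) (mL : measurable_fun setT L) y y' :
  measurable [set w | g w = y /\ L w = y'].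
Proof.
have -> : [set w | g w = y /\ L w = y'] = [set w | g w = y] `&` [set w | L w = y'] by [].
by apply: measurableI; [exact: (msetb g mg (fun b => b = y))|exact: (msetb L mL (fun b => b = y'))].
Qed.

Lemma pr_split (g L : T -> bool) (mg : measurable_fun setT g) (mL : measurable_fun setT L) y :
  pr P [set w | g w = y] = pr P [set w | g w = y /\ L w = true] + pr P [set w | g w = y /\ L w = false].
Proof.
rewrite -prU; try exact: mset2.
  congr pr; apply/seteqP; split => w /=; last by case=> -[].
  by move=> ->; case: (L w); [left|right].
by apply/seteqP; split => w //= [[_ ->] [_]].
Qed.

Lemma pr_split' (g L : T -> bool) (mg : measurable_fun setT g) (mL : measurable_fun setT L) y' :
  pr P [set w | L w = y'] = pr P [set w | g w = true /\ L w = y'] + pr P [set w | g w = false /\ L w = y'].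
Proof.
rewrite -prU; try exact: mset2.
  congr pr; apply/seteqP; split => w /=; last by case=> -[].
  by move=> ->; case: (g w); [left|right].
by apply/seteqP; split => w //= [[-> _] [+ _]].
Qed.

Lemma pr_tot (L : T -> bool) (mL : measurable_fun setT L) :
  pr P [set w | L w = true] + pr P [set w | L w = false] = 1.
Proof.
rewrite -prU; [|exact: (msetb L mL (fun b => b = true))|exact: (msetb L mL (fun b => b = false))|].
  rewrite -prT; congr pr; apply/seteqP; split => w //= _.
  by case: (L w); [left|right].
by apply/seteqP; split => w //= [-> ].
Qed.

End PrLemmas.


Arguments prE {R d T} P A.
Arguments pr_ge0 {R d T} P A.
Arguments prU {R d T} P A B.
Arguments prT {R d T} P.
Arguments mset2 {d T} g L mg mL y y'.
Arguments pr_split {R d T} P g L mg mL y.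
Arguments pr_split' {R d T} P g L mg mL y'.
Arguments pr_tot {R d T} P L mL.
Arguments Fk {R} k t.
Arguments fgen_ninfty {R}.
Arguments Fk0 {R}.
Arguments Fk_incr {R}.
Arguments G {R} F q dl.
Arguments FITb {R} y q dl.

Section Cell.
Variable R : realType.

Lemma Fk_even k (u : R) : Fk k (- u) = Fk k u.
Proof. by rewrite /Fk opprK addeC. Qed.

Lemma adde_def_fgen k (x y : R) : (fgen k x +? fgen k y)%E.
Proof.
have hx := fgen_ninfty k x; have hy := fgen_ninfty k y.
move: hx hy; case: (fgen k x) => [r| |] //; case: (fgen k y) => [r'| |] //.
Qed.

Lemma cell k (Q u p p' : R) : 0 <= Q -> p = Q * (1 + u) -> p' = Q * (1 - u) ->
  (Q%:E * fgen k (p / Q) + Q%:E * fgen k (p' / Q) = Q%:E * Fk k u)%E.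
Proof.
move=> Q0 -> ->; have [->|Qn0] := eqVneq Q 0; first by rewrite !mul0e adde0.
rewrite ![Q * _ / Q]mulrC !mulKf // /Fk muleDr //; exact: adde_def_fgen.
Qed.
End Cell.

Section Table.
Variables (R : realType) (d : measure_display) (T : measurableType d) (P : probability T R).
Variables (g L : T -> bool) (mg : measurable_fun setT g) (mL : measurable_fun setT L).
Hypothesis hL1 : pr P [set w | L w = true] = 1 / 2.
Hypothesis hL0 : pr P [set w | L w = false] = 1 / 2.

Let a := pr P [set w | g w = true /\ L w = true].
Let b := pr P [set w | g w = true /\ L w = false].
Let a' := pr P [set w | g w = false /\ L w = true].
Let b' := pr P [set w | g w = false /\ L w = false].
Let q := pr P [set w | g w = true].

Lemma tab_facts : [/\ q = a + b, pr P [set w | g w = false] = 1 - q,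
  a + a' = 1 / 2, b + b' = 1 / 2 & [/\ 0 <= a, 0 <= b, 0 <= a' & 0 <= b']].
Proof.
split.
- exact: pr_split P g L mg mL true.
- by have := pr_tot P g mg; rewrite /q; lra.
- by rewrite -hL1 (pr_split' P g L mg mL _).
- by rewrite -hL0 (pr_split' P g L mg mL _).
- by split; apply: pr_ge0.
Qed.

Lemma tab_bounds : [/\ 0 <= q, q <= 1, a - b <= q, - (a - b) <= q &
  [/\ a - b <= 1 - q & - (a - b) <= 1 - q]].
Proof. by case: tab_facts => -> _ h1 h2 [? ? ? ?]; split; try split; lra. Qed.

Lemma tab_D k : Dfdiv (fgen k) (Pjoint P g L) (Qprod P g L) = G (Fk k) q (a - b).
Proof.
case: tab_facts => hq hq0 h1 h2 [a0 b0 a'0 b'0].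
rewrite /Dfdiv !big_bool /= /Pjoint /Qprod hL1 hL0 hq0 -/q -/a -/b -/a' -/b'.
rewrite /G !mul1r.
congr (_ + _)%E.
- apply: cell; first by lra.
  + have [q0|qn0] := eqVneq q 0; first by rewrite q0 mul0r; lra.
    by move: qn0; rewrite hq => qn0; field.
  + have [q0|qn0] := eqVneq q 0; first by rewrite q0 mul0r; lra.
    by move: qn0; rewrite hq => qn0; field.
- rewrite -Fk_even; apply: cell; first by lra.
  + have [q0|qn0] := eqVneq (1 - q) 0; first by rewrite q0 mul0r; lra.
    have e : 1 - q = a' + b' by lra.
    by move: qn0; rewrite e => qn0; rewrite (_ : a - b = b' - a'); [field|lra].
  + have [q0|qn0] := eqVneq (1 - q) 0; first by rewrite q0 mul0r; lra.
    have e : 1 - q = a' + b' by lra.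
    by move: qn0; rewrite e => qn0; rewrite (_ : a - b = b' - a'); [field|lra].
Qed.

Lemma tab_FIT y : FIT P g L y y = FITb y q (a - b).
Proof.
case: tab_facts => hq hq0 h1 h2 [a0 b0 a'0 b'0].
case: y; rewrite /FIT /FITb ?hL1 ?hL0 ?hq0 -/q -/a -/b' /=; congr (_ / _); lra.
Qed.

End Table.

Lemma pr_split3 {R : realType} {d} {T : measurableType d} (P : probability T R)
  (g L M : T -> bool) (mg : measurable_fun setT g) (mL : measurable_fun setT L)
  (mM : measurable_fun setT M) y y' :
  pr P [set w | g w = y /\ M w = y'] =
  pr P [set w | g w = y /\ L w = true /\ M w = y'] + pr P [set w | g w = y /\ L w = false /\ M w = y'].
Proof.
have m3 : forall a, measurable [set w | g w = y /\ L w = a /\ M w = y'].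
  move=> a; have -> : [set w | g w = y /\ L w = a /\ M w = y'] =
    [set w | g w = y] `&` ([set w | L w = a] `&` [set w | M w = y']) by [].
  apply: measurableI; first exact: (msetb g mg (fun b => b = y)).
  by apply: measurableI; [exact: (msetb L mL (fun b => b = a))|exact: (msetb M mM (fun b => b = y'))].
rewrite -prU //.
  congr pr; apply/seteqP; split => w /=; last by case=> -[? [? ?]].
  by move=> [-> ->]; case: (L w); [left|right].
by apply/seteqP; split => w //= [[_ [-> _]] [_ [+ _]]].
Qed.
Theorem theorem8 (R : realType) (d : measure_display) (T : measurableType d)
  (P : probability T R) (dx : measure_display) (Xsp : measurableType dx)
  (X : T -> Xsp) (Y Yt : T -> bool)
  (mX : measurable_fun setT X) (mY : measurable_fun setT Y)
  (mYt : measurable_fun setT Yt)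
  (* noisy label conditionally independent of X given Y *)
  (cond_indep : forall (A : set Xsp), measurable A -> forall y y' : bool,
      pr P [set w | A (X w) /\ Y w = y /\ Yt w = y'] * pr P [set w | Y w = y]
      = pr P [set w | A (X w) /\ Y w = y] * pr P [set w | Y w = y /\ Yt w = y'])
  (* e_+ = P(Yt=-1 | Y=+1), e_- = P(Yt=+1 | Y=-1) *)
  (eplus eminus : R)
  (Heplus : eplus = pr P [set w | Yt w = false /\ Y w = true] / pr P [set w | Y w = true])
  (Heminus : eminus = pr P [set w | Yt w = true /\ Y w = false] / pr P [set w | Y w = false])
  (Hnoise : eplus + eminus < 1)
  (Hbal : pr P [set w | Y w = true] = pr P [set w | Y w = false])
  (Hsym : eplus = eminus)
  (H : set (Xsp -> bool))
  (Hmeas : forall h, H h -> measurable_fun setT h)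
  (k : fdiv_kind) (hstar : Xsp -> bool)
  (Hhstar_in : H hstar)
  (Hhstar_max : forall h, H h ->
     (Dfdiv (@fgen R k) (Pjoint P (h \o X) Y) (Qprod P (h \o X) Y)
      <= Dfdiv (@fgen R k) (Pjoint P (hstar \o X) Y) (Qprod P (hstar \o X) Y))%E) :
  let Hstar : set (Xsp -> bool) :=
    [set h | H h /\
       (forall y : bool, forall y0 : bool,
          FIT P (hstar \o X) Y y0 y0 <= FIT P (h \o X) Yt y y) /\
       (exists y0 : bool, 1 <= FIT P (hstar \o X) Y y0 y0)] `|` [set hstar] in
  forall h, Hstar h ->
    (Dfdiv (@fgen R k) (Pjoint P (h \o X) Yt) (Qprod P (h \o X) Yt)
     <= Dfdiv (@fgen R k) (Pjoint P (hstar \o X) Yt) (Qprod P (hstar \o X) Yt))%E.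
Proof.
move=> Hstar h [[HH [Hfit Hex]]|->]; last exact: le_refl.
have pYtot := pr_tot P Y mY.
have pY1 : pr P [set w | Y w = true] = 1 / 2 by lra.
have pY0 : pr P [set w | Y w = false] = 1 / 2 by lra.
set e := eplus.
have sw : forall a b : bool, [set w | Yt w = b /\ Y w = a] = [set w | Y w = a /\ Yt w = b].
  by move=> a b; apply/seteqP; split => w /= [].
have pTF : pr P [set w | Y w = true /\ Yt w = false] = e / 2.
  by move: Heplus; rewrite sw pY1 /e => ->; field.
have pFT : pr P [set w | Y w = false /\ Yt w = true] = e / 2.
  by move: Heminus; rewrite sw pY0 -Hsym /e => ->; field.
have pTT : pr P [set w | Y w = true /\ Yt w = true] = 1 / 2 - e / 2.
  by have := pr_split P Y Yt mY mYt true; rewrite pY1 pTF; lra.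
have pFF : pr P [set w | Y w = false /\ Yt w = false] = 1 / 2 - e / 2.
  by have := pr_split P Y Yt mY mYt false; rewrite pY0 pFT; lra.
have pYt1 : pr P [set w | Yt w = true] = 1 / 2.
  by rewrite (pr_split' P Y Yt mY mYt true) pTT pFT; lra.
have pYt0 : pr P [set w | Yt w = false] = 1 / 2.
  by rewrite (pr_split' P Y Yt mY mYt false) pTF pFF; lra.
have e0 : 0 <= e by have := pr_ge0 P [set w | Y w = true /\ Yt w = false]; rewrite pTF; lra.
have e12 : e < 1 / 2 by move: Hnoise; rewrite -Hsym /e; lra.
have noisy : forall h' : Xsp -> bool, measurable_fun setT h' -> forall y y',
  pr P [set w | (h' \o X) w = y /\ Yt w = y'] =
  2 * (pr P [set w | (h' \o X) w = y /\ Y w = true] * pr P [set w | Y w = true /\ Yt w = y'] +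
       pr P [set w | (h' \o X) w = y /\ Y w = false] * pr P [set w | Y w = false /\ Yt w = y']).
  move=> h' mh' y y'.
  have mg : measurable_fun setT (h' \o X) := measurableT_comp mh' mX.
  have mA : measurable [set x | h' x = y] := msetb h' mh' (fun b => b = y).
  have c1 : pr P [set w | (h' \o X) w = y /\ Y w = true /\ Yt w = y'] * pr P [set w | Y w = true] =
    pr P [set w | (h' \o X) w = y /\ Y w = true] * pr P [set w | Y w = true /\ Yt w = y'] :=
    cond_indep _ mA true y'.
  have c2 : pr P [set w | (h' \o X) w = y /\ Y w = false /\ Yt w = y'] * pr P [set w | Y w = false] =
    pr P [set w | (h' \o X) w = y /\ Y w = false] * pr P [set w | Y w = false /\ Yt w = y'] :=
    cond_indep _ mA false y'.
  rewrite (pr_split3 P (h' \o X) Y Yt mg mY mYt y y').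
  move: c1 c2; rewrite pY1 pY0; lra.
have mh := Hmeas h HH.
have mhs := Hmeas hstar Hhstar_in.
have mg := measurableT_comp mh mX.
have mgs := measurableT_comp mhs mX.
have dnoisy : forall h' : Xsp -> bool, measurable_fun setT h' ->
  pr P [set w | (h' \o X) w = true /\ Yt w = true] - pr P [set w | (h' \o X) w = true /\ Yt w = false] =
  (1 - 2 * e) * (pr P [set w | (h' \o X) w = true /\ Y w = true] - pr P [set w | (h' \o X) w = true /\ Y w = false]).
  by move=> h' mh'; rewrite !noisy // pTT pTF pFT pFF; field.
have Dc := fun (g : T -> bool) (mg : measurable_fun setT g) (k : fdiv_kind) => tab_D _ _ _ P g Y mg mY pY1 pY0 k.
have Dn := fun (g : T -> bool) (mg : measurable_fun setT g) (k : fdiv_kind) => tab_D _ _ _ P g Yt mg mYt pYt1 pYt0 k.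
have Fc := fun (g : T -> bool) (mg : measurable_fun setT g) (y : bool) => tab_FIT _ _ _ P g Y mg mY pY1 pY0 y.
have Fn := fun (g : T -> bool) (mg : measurable_fun setT g) (y : bool) => tab_FIT _ _ _ P g Yt mg mYt pYt1 pYt0 y.
rewrite (Dn _ mg) (Dn _ mgs) (dnoisy _ mh) (dnoisy _ mhs).
have qn : forall g : T -> bool, pr P [set w | g w = true] = pr P [set w | g w = true] by [].
case: (tab_bounds _ _ _ P (h \o X) Y mg mY pY1 pY0) => b1 b2 b3 b4 [b5 b6].
case: (tab_bounds _ _ _ P (hstar \o X) Y mgs mY pY1 pY0) => b1' b2' b3' b4' [b5' b6'].
apply: (@core R (Fk k) (Fk0 k) (Fk_incr k)) => //; [lra|lra| | |].
- by have := Hhstar_max h HH; rewrite (Dc _ mg) (Dc _ mgs).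
- move=> y y0; have := Hfit y y0; rewrite (Fc _ mgs) (Fn _ mg).
  by rewrite (dnoisy _ mh).
- case: Hex => y0; rewrite (Fc _ mgs) => H1; by exists y0.
Qed.
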